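(* Let $H$ be a normal subgroup of a group $G$. If $H$ and $G/H$ are Jordan groups, then any set of pairwise nonisomorphic simple nonabelian finite subgroups of $G$ is finite.
   Context: A group $G$ is called Jordan if there exists a positive integer $d$, depending only on $G$, such that every finite subgroup $K$ of $G$ contains a normal abelian subgroup of index at most $d$ in $K$. *)

(* Defs.v *)
From Stdlib Require Import List Arith ClassicalEpsilon.
Set Implicit Arguments.

Record gsig := GSig {
  gcar :> Type;
  gmul : gcar -> gcar -> gcar;
  gone : gcar;
  ginv : gcar -> gcar }.
Arguments gmul {g}. Arguments ginv {g}.

Record group := Group {
  gsig_of :> gsig;
  gmulA : forall x y z : gsig_of,
      gmul (gmul x y) z = gmul x (gmul y z);
  gmul1g : forall x : gsig_of, gmul (gone gsig_of) x = x;
  gmulVg : forall x : gsig_of, gmul (ginv x) x = gone gsig_of }.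

Section Preds.
Variable S : gsig.

Definition is_subgroup (P : S -> Prop) : Prop :=
  P (gone S) /\ (forall x y, P x -> P y -> P (gmul x y))
  /\ (forall x, P x -> P (ginv x)).

Definition finite_set (P : S -> Prop) : Prop :=
  exists s : list S, forall x, P x <-> In x s.

Definition abelian_set (P : S -> Prop) : Prop :=
  forall x y, P x -> P y -> gmul x y = gmul y x.

Definition normal_in (A K : S -> Prop) : Prop :=
  (forall x, A x -> K x) /\
  (forall k a, K k -> A a -> A (gmul (gmul (ginv k) a) k)).

Definition index_le (A K : S -> Prop) (d : nat) : Prop :=
  exists s : list S, length s <= d /\ (forall g, In g s -> K g) /\
    (forall k, K k -> exists g, In g s /\ A (gmul (ginv g) k)).

(* The subgroup P of S (viewed as a group in its own right) is Jordan:
   its finite subgroups are exactly the finite subgroups K of S with K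
   contained in P. *)
Definition Jordan_in (P : S -> Prop) : Prop :=
  exists d : nat, 0 < d /\
    forall K : S -> Prop, is_subgroup K -> (forall x, K x -> P x) ->
      finite_set K ->
      exists A : S -> Prop, is_subgroup A /\ normal_in A K /\
        abelian_set A /\ index_le A K d.

Definition Jordan : Prop := Jordan_in (fun _ => True).

Definition simple_subgroup (P : S -> Prop) : Prop :=
  is_subgroup P /\ (exists x, P x /\ x <> gone S) /\
  forall N : S -> Prop, is_subgroup N -> normal_in N P ->
    (forall x, N x -> x = gone S) \/ (forall x, P x -> N x).

Definition simple_nonabelian_finite_subgroup (P : S -> Prop) : Prop :=
  simple_subgroup P /\ ~ abelian_set P /\ finite_set P.

Definition isomorphic_subgroups (P Q : S -> Prop) : Prop :=
  exists f : S -> S,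
    (forall x, P x -> Q (f x)) /\
    (forall x y, P x -> P y -> f x = f y -> x = y) /\
    (forall y, Q y -> exists x, P x /\ f x = y) /\
    (forall x y, P x -> P y -> f (gmul x y) = gmul (f x) (f y)).

End Preds.
Arguments is_subgroup {S}. Arguments finite_set {S}. Arguments abelian_set {S}.
Arguments normal_in {S}. Arguments index_le {S}. Arguments Jordan_in {S}.
Arguments simple_subgroup {S}. Arguments simple_nonabelian_finite_subgroup {S}.
Arguments isomorphic_subgroups {S}.

(* The quotient G/H: its elements are the cosets gH; operations are
   computed on (chosen) representatives, which is well defined when H is a
   normal subgroup. *)
Section Quotient.
Variables (G : gsig) (H : G -> Prop).

Definition coset (g : G) : G -> Prop := fun x => H (gmul (ginv g) x).

Definition qcar : Type := { C : G -> Prop | exists g, C = coset g }.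

Definition qmk (g : G) : qcar := exist _ (coset g) (ex_intro _ g eq_refl).

Definition qrep (C : qcar) : G :=
  proj1_sig (constructive_indefinite_description _ (proj2_sig C)).

Definition quotient : gsig :=
  @GSig qcar (fun C D => qmk (gmul (qrep C) (qrep D)))
             (qmk (gone G)) (fun C => qmk (ginv (qrep C))).
End Quotient.
Arguments quotient {G}.

(* Main.v *)
Require Import Defs.
From Stdlib Require Import List Arith Lia ClassicalEpsilon ProofIrrelevance FunctionalExtensionality PropExtensionality.
Import ListNotations.

Lemma mulgV (G : group) (x : G) : gmul x (ginv x) = gone G.
Proof.
  rewrite <- (gmul1g G (gmul x (ginv x))).
  rewrite <- (gmulVg G (ginv x)) at 1.
  rewrite gmulA. rewrite <- (gmulA G (ginv x) x (ginv x)).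
  rewrite gmulVg, gmul1g, gmulVg. reflexivity.
Qed.

Lemma mulg1 (G : group) (x : G) : gmul x (gone G) = x.
Proof. rewrite <- (gmulVg G x), <- gmulA, mulgV, gmul1g. reflexivity. Qed.

Lemma mulKg (G : group) (x y : G) : gmul (ginv x) (gmul x y) = y.
Proof. rewrite <- gmulA, gmulVg, gmul1g. reflexivity. Qed.

Lemma mulKVg (G : group) (x y : G) : gmul x (gmul (ginv x) y) = y.
Proof. rewrite <- gmulA, mulgV, gmul1g. reflexivity. Qed.

Lemma inv_uniq (G : group) (u v : G) : gmul u v = gone G -> v = ginv u.
Proof. intro E. rewrite <- (mulKg G u v), E, mulg1. reflexivity. Qed.

Lemma invK (G : group) (x : G) : ginv (ginv x) = x.
Proof. symmetry. apply inv_uniq. apply gmulVg. Qed.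

Lemma invM (G : group) (x y : G) : ginv (gmul x y) = gmul (ginv y) (ginv x).
Proof.
  symmetry. apply inv_uniq. rewrite gmulA, <- (gmulA G y), mulgV, gmul1g, mulgV.
  reflexivity.
Qed.

Lemma inv_eq1 (G : group) (a b : G) : gmul (ginv a) b = gone G -> b = a.
Proof. intro E. rewrite <- (mulKVg G a b), E, mulg1. reflexivity. Qed.

Lemma coset_eq (G : group) (H : G -> Prop) (a b : G) :
  is_subgroup H -> H (gmul (ginv a) b) -> coset G H a = coset G H b.
Proof.
  intros [H1 [HM HI]] Hab. apply functional_extensionality; intro z.
  apply propositional_extensionality. unfold coset. split; intro Hz.
  - replace (gmul (ginv b) z) with (gmul (ginv (gmul (ginv a) b)) (gmul (ginv a) z)).
    + apply HM; auto.
    + rewrite invM, invK, gmulA, mulKVg. reflexivity.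
  - replace (gmul (ginv a) z) with (gmul (gmul (ginv a) b) (gmul (ginv b) z)).
    + apply HM; auto.
    + rewrite gmulA, mulKVg. reflexivity.
Qed.

Lemma coset_eq_inv (G : group) (H : G -> Prop) (a b : G) :
  is_subgroup H -> coset G H a = coset G H b -> H (gmul (ginv a) b).
Proof.
  intros [H1 _] E. change (coset G H a b). rewrite E. unfold coset. rewrite gmulVg. exact H1.
Qed.

Lemma qmk_eq (G : group) (H : G -> Prop) (a b : G) :
  coset G H a = coset G H b -> qmk G H a = qmk G H b.
Proof.
  intro E. unfold qmk. generalize (ex_intro (fun g => coset G H a = coset G H g) a eq_refl).
  generalize (ex_intro (fun g => coset G H b = coset G H g) b eq_refl).
  rewrite E. intros p q. f_equal. apply proof_irrelevance.
Qed.

Lemma qmk_eq_inv (G : group) (H : G -> Prop) (a b : G) :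
  qmk G H a = qmk G H b -> coset G H a = coset G H b.
Proof. intro E. apply (f_equal (@proj1_sig _ _)) in E. exact E. Qed.

Lemma qrep_spec (G : group) (H : G -> Prop) (C : qcar G H) :
  proj1_sig C = coset G H (qrep C).
Proof.
  unfold qrep. destruct (constructive_indefinite_description _ (proj2_sig C)). simpl. exact e.
Qed.

Lemma qrep_qmk (G : group) (H : G -> Prop) (a : G) :
  is_subgroup H -> H (gmul (ginv (qrep (qmk G H a))) a).
Proof.
  intro HH. apply coset_eq_inv; auto. rewrite <- qrep_spec. reflexivity.
Qed.

Lemma qmk_mul (G : group) (H : G -> Prop) (a b : G) :
  is_subgroup H -> normal_in H (fun _ => True) ->
  @gmul (quotient H) (qmk G H a) (qmk G H b) = qmk G H (gmul a b).
Proof.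
  intros HH [_ Hn]. simpl. apply qmk_eq, coset_eq; auto.
  pose proof (qrep_qmk G H a HH) as Ha. pose proof (qrep_qmk G H b HH) as Hb.
  set (r := qrep (qmk G H a)) in *. set (r' := qrep (qmk G H b)) in *.
  replace (gmul (ginv (gmul r r')) (gmul a b)) with
    (gmul (gmul (gmul (ginv r') (gmul (ginv r) a)) r') (gmul (ginv r') b)).
  - destruct HH as [_ [HM _]]. apply HM; auto.
  - rewrite invM, !gmulA, mulKVg. reflexivity.
Qed.

Lemma qmk_inv (G : group) (H : G -> Prop) (a : G) :
  is_subgroup H -> normal_in H (fun _ => True) ->
  @ginv (quotient H) (qmk G H a) = qmk G H (ginv a).
Proof.
  intros HH [_ Hn]. simpl. apply qmk_eq, coset_eq; auto.
  pose proof (qrep_qmk G H a HH) as Ha.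
  set (r := qrep (qmk G H a)) in *.
  destruct HH as [H1 [HM HI]].
  pose proof (Hn (ginv a) _ I (HI _ Ha)) as X.
  rewrite invK, invM, invK, !gmulA, mulKVg in X. rewrite invK. exact X.
Qed.
Import ListNotations.
Set Implicit Arguments.

Fixpoint idx {A : Type} (x : A) (s : list A) : nat :=
  match s with
  | [] => 0
  | a :: s' => if excluded_middle_informative (a = x) then 0 else S (idx x s')
  end.

Lemma idx_lt A (x : A) s : In x s -> idx x s < length s.
Proof.
  induction s as [|a s IH]; simpl; [tauto|].
  destruct (excluded_middle_informative (a = x)); [lia|].
  intros [E|I]; [congruence|]. specialize (IH I). lia.
Qed.

Lemma nth_idx A (x : A) s d : In x s -> nth (idx x s) s d = x.
Proof.
  induction s as [|a s IH]; simpl; [tauto|].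
  destruct (excluded_middle_informative (a = x)); [auto|].
  intros [E|I]; [congruence|]. auto.
Qed.

Lemma idx_nth A (s : list A) i d : NoDup s -> i < length s -> idx (nth i s d) s = i.
Proof.
  revert i; induction s as [|a s IH]; simpl; intros i ND Hi; [lia|].
  inversion ND; subst.
  destruct i as [|i].
  - destruct (excluded_middle_informative (a = a)); congruence.
  - destruct (excluded_middle_informative (a = nth i s d)) as [E|E].
    + exfalso. apply H1. rewrite E. apply nth_In. lia.
    + rewrite IH; auto. lia.
Qed.

Definition table (G : group) (s : list G) : list (list nat) :=
  map (fun a => map (fun b => idx (gmul a b) s) s) s.

Arguments table {G}.

Lemma nth_map' A B (f : A -> B) l n d d' : n < length l -> nth n (map f l) d' = f (nth n l d).
Proof.
  intro Hn. rewrite nth_indep with (d' := f d) by (rewrite length_map; auto). apply map_nth.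
Qed.

Lemma table_entry (G : group) (s : list G) i j :
  i < length s -> j < length s ->
  nth j (nth i (table s) []) 0 = idx (gmul (nth i s (gone G)) (nth j s (gone G))) s.
Proof.
  intros Hi Hj. unfold table. rewrite nth_map' with (d := gone G) by auto.
  rewrite nth_map' with (d := gone G) by auto. reflexivity.
Qed.

Lemma table_iso {G : group} (S1 S2 : G -> Prop) s1 s2 :
  (forall x y, S1 x -> S1 y -> S1 (gmul x y)) ->
  (forall x y, S2 x -> S2 y -> S2 (gmul x y)) ->
  NoDup s1 -> NoDup s2 -> (forall x, S1 x <-> In x s1) -> (forall x, S2 x <-> In x s2) ->
  table s1 = table s2 -> isomorphic_subgroups S1 S2.
Proof.
  intros C1 C2 N1 N2 E1 E2 T.
  assert (L : length s1 = length s2).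
  { pose proof (f_equal (@length _) T) as X. unfold table in X. rewrite !length_map in X. exact X. }
  exists (fun x => nth (idx x s1) s2 (gone G)). split; [|split; [|split]].
  - intros x Hx. apply E2, nth_In. rewrite <- L. apply idx_lt, E1, Hx.
  - intros x y Hx Hy Exy. apply E1 in Hx. apply E1 in Hy.
    pose proof (idx_lt _ _ Hx). pose proof (idx_lt _ _ Hy).
    apply (proj1 (NoDup_nth s2 (gone G)) N2) in Exy; try lia.
    rewrite <- (nth_idx x s1 (gone G)), <- (nth_idx y s1 (gone G)), Exy; auto.
  - intros y Hy. apply E2 in Hy. pose proof (idx_lt _ _ Hy).
    exists (nth (idx y s2) s1 (gone G)). split.
    + apply E1, nth_In. lia.
    + rewrite idx_nth by (auto; lia). apply nth_idx; auto.
  - intros x y Hx Hy. pose proof (C1 x y Hx Hy) as Hxy.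
    apply E1 in Hx, Hy, Hxy.
    pose proof (idx_lt _ _ Hx). pose proof (idx_lt _ _ Hy).
    set (i := idx x s1) in *. set (j := idx y s1) in *.
    assert (Eq : idx (gmul x y) s1 = idx (gmul (nth i s2 (gone G)) (nth j s2 (gone G))) s2).
    { rewrite <- table_entry by lia. rewrite <- T, table_entry by lia.
      unfold i, j. rewrite !nth_idx; auto. }
    rewrite Eq. apply nth_idx. apply E2, C2; apply E2, nth_In; lia.
Qed.

Fixpoint lists_upto {A} (xs : list A) (n : nat) : list (list A) :=
  match n with
  | 0 => [[]]
  | S n' => [] :: flat_map (fun a => map (cons a) (lists_upto xs n')) xs
  end.

Lemma in_lists_upto A (xs : list A) n (l : list A) :
  length l <= n -> (forall a, In a l -> In a xs) -> In l (lists_upto xs n).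
Proof.
  revert l; induction n as [|n IH]; intros l Hl Hx; destruct l as [|a l]; simpl in *.
  - left; auto.
  - lia.
  - left; auto.
  - right. apply in_flat_map. exists a. split; auto. apply in_map, IH; auto. lia.
Qed.

Lemma table_in (G : group) (s : list G) D :
  length s <= D -> (forall a b, In a s -> In b s -> In (gmul a b) s) ->
  In (table s) (lists_upto (lists_upto (seq 0 D) D) D).
Proof.
  intros Hl Hc. apply in_lists_upto.
  - unfold table. rewrite length_map. auto.
  - intros r Hr. unfold table in Hr. apply in_map_iff in Hr. destruct Hr as [a [<- Ha]].
    apply in_lists_upto.
    + rewrite length_map; auto.
    + intros k Hk. apply in_map_iff in Hk. destruct Hk as [b [<- Hb]].
      apply in_seq. pose proof (idx_lt _ _ (Hc a b Ha Hb)). lia.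
Qed.

Lemma count_finite (G : group) (F : (G -> Prop) -> Prop) (D : nat) :
  (forall S, F S -> (forall x y, S x -> S y -> S (gmul x y)) /\ finite_set S /\
     exists l, length l <= D /\ forall x, S x -> In x l) ->
  (forall S1 S2, F S1 -> F S2 -> isomorphic_subgroups S1 S2 -> S1 = S2) ->
  exists l : list (G -> Prop), forall S, F S -> In S l.
Proof.
  intros HF Hiso.
  set (P := fun c (S : G -> Prop) => F S /\ (forall x y, S x -> S y -> S (gmul x y)) /\
     exists s, NoDup s /\ (forall x, S x <-> In x s) /\ table s = c).
  exists (map (fun c => epsilon (inhabits (fun _ : G => False)) (P c))
              (lists_upto (lists_upto (seq 0 D) D) D)).
  intros S FS. destruct (HF S FS) as [CS [[s0 Hs0] [l [Hl Hsl]]]].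
  set (s := nodup (fun a b : G => excluded_middle_informative (a = b)) s0).
  assert (Es : forall x, S x <-> In x s).
  { intro x. unfold s. rewrite nodup_In. apply Hs0. }
  assert (Ns : NoDup s) by apply NoDup_nodup.
  assert (Ls : length s <= D).
  { assert (length s <= length l); [|lia]. apply NoDup_incl_length; auto.
    intros x Hx. apply Hsl, Es, Hx. }
  assert (Pc : P (table s) S) by (repeat split; auto; exists s; auto).
  pose proof (epsilon_spec (inhabits (fun _ : G => False)) (P (table s)) (ex_intro _ S Pc)) as Sp.
  set (S' := epsilon _ (P (table s))) in *.
  destruct Sp as [FS' [CS' [s' [Ns' [Es' Ts']]]]].
  assert (S = S').
  { apply Hiso; auto. eapply table_iso; [exact CS|exact CS'|exact Ns|exact Ns'|exact Es|exact Es'|congruence]. }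
  apply in_map_iff. exists (table s). split; [symmetry; assumption|].
  apply table_in; auto. intros a b Ha Hb. apply Es, CS; apply Es; auto.
Qed.

Theorem theorem1p12 (G : group) (H : G -> Prop) :
  is_subgroup H -> normal_in H (fun _ => True) ->
  Jordan_in H -> Jordan (quotient H) ->
  forall F : (G -> Prop) -> Prop,
    (forall S, F S -> simple_nonabelian_finite_subgroup S) ->
    (forall S1 S2, F S1 -> F S2 -> isomorphic_subgroups S1 S2 -> S1 = S2) ->
    exists l : list (G -> Prop), forall S, F S -> In S l.
Proof.
  intros HH Hnorm [d1 [_ J1]] [d2 [_ J2]] F HF Hiso.
  apply count_finite with (D := d1 + d2); auto.
  intros S FS. destruct (HF S FS) as [[Ssub [Snt Ssimp]] [Snab Sfin]].
  pose proof Ssub as [S1 [SM SI]].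
  pose proof HH as [H1 [HM HI]].
  split; [exact SM|split; [exact Sfin|]].
  set (M := fun x => H x /\ S x).
  assert (Msub : is_subgroup M).
  { unfold M; split; [|split]; intros; intuition. }
  assert (Mn : normal_in M S).
  { unfold M; split; [intros x [_ Hx]; exact Hx|].
    intros k a Sk [Ha Sa]. split.
    - apply (proj2 Hnorm); auto.
    - apply SM; auto. }
  destruct (Ssimp M Msub Mn) as [Mtriv | Mall].
  - (* S meets H trivially: work in the quotient *)
    set (K := fun C : quotient H => exists x, S x /\ C = qmk G H x).
    assert (Ksub : is_subgroup K).
    { split; [|split].
      - exists (gone G). split; auto.
      - intros C D [x [Sx ->]] [y [Sy ->]]. exists (gmul x y). split; auto.
        apply qmk_mul; auto.
      - intros C [x [Sx ->]]. exists (ginv x). split; auto. apply qmk_inv; auto. }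
    assert (Kfin : finite_set K).
    { destruct Sfin as [s0 Hs0]. exists (map (qmk G H) s0). intro C. split.
      - intros [x [Sx ->]]. apply in_map, Hs0, Sx.
      - intro HC. apply in_map_iff in HC. destruct HC as [x [<- Hx]].
        exists x. split; auto. apply Hs0, Hx. }
    destruct (J2 K Ksub (fun _ _ => I) Kfin) as [A [Asub [An [Aab [s [Hlen [Hs Hcov]]]]]]].
    pose proof Asub as [A1 [AM AI]].
    set (N := fun x => S x /\ A (qmk G H x)).
    assert (Nsub : is_subgroup N).
    { unfold N; split; [|split].
      - split; auto.
      - intros x y [Sx Ax] [Sy Ay]. split; auto. rewrite <- qmk_mul; auto.
      - intros x [Sx Ax]. split; auto. rewrite <- qmk_inv; auto. }
    assert (Nn : normal_in N S).
    { unfold N; split; [intros x [Sx _]; exact Sx|].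
      intros k a Sk [Sa Aa]. split.
      - apply SM; auto.
      - rewrite <- !qmk_mul, <- qmk_inv; auto.
        apply (proj2 An); auto. exists k; auto. }
    destruct (Ssimp N Nsub Nn) as [Ntriv | Nall].
    + exists (map (fun g => epsilon (inhabits (gone G)) (fun t => S t /\ g = qmk G H t)) s).
      rewrite length_map. split; [eapply Nat.le_trans; [exact Hlen|lia]|].
      intros x Sx.
      destruct (Hcov (qmk G H x) (ex_intro _ x (conj Sx eq_refl))) as [g [gin Ag]].
      destruct (Hs g gin) as [t0 Ht0].
      assert (Ex : forall t, S t -> g = qmk G H t -> x = t).
      { intros t St Eg. apply inv_eq1. apply Ntriv. split.
        - apply SM; auto.
        - rewrite <- qmk_mul, <- qmk_inv, <- Eg; auto. }
      pose proof (epsilon_spec (inhabits (gone G)) (fun t => S t /\ g = qmk G H t)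
                    (ex_intro _ t0 Ht0)) as [St Eg].
      apply in_map_iff. exists g. split; auto.
      symmetry. apply Ex; auto.
    + exfalso. apply Snab. intros x y Sx Sy.
      destruct (Nall x Sx) as [_ Ax]. destruct (Nall y Sy) as [_ Ay].
      pose proof (Aab _ _ Ax Ay) as E.
      rewrite !qmk_mul in E; auto.
      apply qmk_eq_inv, coset_eq_inv in E; auto.
      symmetry. apply inv_eq1. apply Mtriv. split; auto.
  -
    destruct (J1 S Ssub (fun x Sx => proj1 (Mall x Sx)) Sfin)
      as [A [Asub [An [Aab [s [Hlen [Hs Hcov]]]]]]].
    destruct (Ssimp A Asub An) as [Atr | Aall].
    + exists s. split; [lia|]. intros x Sx.
      destruct (Hcov x Sx) as [g [gin Ag]].
      apply Atr, inv_eq1 in Ag. subst; auto.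
    + exfalso. apply Snab. intros x y Sx Sy. apply Aab; auto.
Qed.
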